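(* Let $J\subset\mathbb N_+$ be finite and let $\mathcal M(M_J,P)_l$ denote the part of the Margolis homology $\mathcal M(M_J,P)=\ker P/\operatorname{im}P$ of reduced length $l$. If $|J|=2t$, then $\dim_{\mathbb F_2}\mathcal M(M_J,P)_l=2^t$ for $l=t$ and $0$ otherwise. If $|J|=2t+1$, then $\dim_{\mathbb F_2}\mathcal M(M_J,P)_l=2^t$ for $l\in\{t,t+1\}$ and $0$ otherwise.
   Context: Over $\mathbb F_2$, $\Lambda(Q_1,P)$ is the exterior algebra on $Q_1,P$, a Hopf algebra with $Q_1$ primitive and $\Delta(P)=P\otimes1+Q_1\otimes Q_1+1\otimes P$. For $i\in\mathbb N_+$, $M_i$ has basis $t_i,x_i$ with $Q_1(x_i)=t_i$, $Q_1(t_i)=0$, $P=0$; for finite $J\subset\mathbb N_+$, $M_J=\bigotimes_{j\in J}M_j$ with action through the coproduct. $M_J$ has basis $t_Ix_{J\setminus I}$ ($I\subseteq J$; the tensor with factor $t_j$ for $j\in I$, $x_j$ otherwise), whose reduced length is $|J\setminus I|$. $Q_1$ lowers reduced length by $1$ and $P$ by $2$, so $\mathcal M(M_J,P)$ splits as a direct sum of its reduced-length-homogeneous parts $\mathcal M(M_J,P)_l$. *)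

(* Defs.v *)
From HB Require Import structures.
From mathcomp Require Import all_boot all_order all_algebra.
Set Implicit Arguments. Unset Strict Implicit. Unset Printing Implicit Defensive.
Import GRing.Theory.
Local Open Scope ring_scope.

(* Basis of M_j : the boolean [true] stands for x_j, [false] for t_j.
   Structure maps are given by coefficients: [Mq j b c] is the coefficient
   of basis element c in Q_1(b); [Mp j b c] the coefficient of c in P(b). *)
Definition Mq (j : nat) (b c : bool) : 'F_2 := ((b == true) && (c == false))%:R.
Definition Mp (j : nat) (b c : bool) : 'F_2 := 0.

(* M_J = M_{j1} (x) (M_{j2} (x) ( ... (x) F_2)) for J = [:: j1; j2; ...],
   basis = boolean sequences of length size J (tensor basis vectors).
   Action through the coproduct:
     Q1(a (x) m) = Q1 a (x) m + a (x) Q1 m          (Q1 primitive)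
     P (a (x) m) = P a (x) m + Q1 a (x) Q1 m + a (x) P m
   (char 2: no signs); on the trivial module F_2 (empty J) Q1, P act by 0. *)
Fixpoint tq (J : seq nat) (s s' : seq bool) : 'F_2 :=
  match J, s, s' with
  | j :: J', b :: r, c :: r' => Mq j b c * (r == r')%:R + (b == c)%:R * tq J' r r'
  | _, _, _ => 0
  end.

Fixpoint tp (J : seq nat) (s s' : seq bool) : 'F_2 :=
  match J, s, s' with
  | j :: J', b :: r, c :: r' =>
      Mp j b c * (r == r')%:R + Mq j b c * tq J' r r' + (b == c)%:R * tp J' r r'
  | _, _, _ => 0
  end.

Definition MJbasis (J : seq nat) := ((size J).-tuple bool)%type.

(* matrix of P acting on row vectors: row i is P(basis element i) *)
Definition Pmx (J : seq nat) : 'M['F_2]_#|{: MJbasis J}| :=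
  \matrix_(i, k) tp J (tval (enum_val i : MJbasis J)) (tval (enum_val k : MJbasis J)).

Definition redlen (J : seq nat) (b : MJbasis J) : nat := count id b.

Definition lenpart (J : seq nat) (l : nat) : 'M['F_2]_#|{: MJbasis J}| :=
  \matrix_(i, k) ((i == k) && (redlen (enum_val i : MJbasis J) == l))%:R.

Definition margolisDim (J : seq nat) (l : nat) : nat :=
  (\rank (kermx (Pmx J) :&: lenpart J l)%MS - \rank (Pmx J :&: lenpart J l)%MS)%N.

(* Main.v *)
Require Import Defs.
From mathcomp Require Import all_boot all_order all_algebra.
From mathcomp Require Import ring zify.
Set Implicit Arguments. Unset Strict Implicit. Unset Printing Implicit Defensive.
Import GRing.Theory.
Local Open Scope ring_scope.

Lemma F2_addxx (x : 'F_2) : x + x = 0.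
Proof. by rewrite -mulr2n -mulr_natr (pcharf0 (pchar_Fp (isT : prime 2))) mulr0. Qed.

Lemma addmxx m n (A : 'M['F_2]_(m, n)) : A + A = 0.
Proof. by apply/matrixP => i j; rewrite !mxE F2_addxx. Qed.

Lemma rank_conj m m' (U : 'M['F_2]_(m, m')) (W : 'M['F_2]_(m', m))
  (A C : 'M['F_2]_m) (B D : 'M['F_2]_m') :
  U *m W = 1%:M -> W *m U = 1%:M -> A *m U = U *m B -> C *m U = U *m D ->
  \rank (C *m A) = \rank (D *m B).
Proof.
move=> UW WU AU CU.
have E : C *m A *m U = U *m (D *m B) by rewrite -mulmxA AU mulmxA CU -mulmxA.
have e1 : \rank (C *m A) = \rank (C *m A *m U).
  apply/eqP; rewrite eqn_leq mxrankM_maxl andbT.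
  by rewrite -{1}(mulmx1 (C *m A)) -UW mulmxA mxrankM_maxl.
have e2 : \rank (U *m (D *m B)) = \rank (D *m B).
  apply/eqP; rewrite eqn_leq mxrankM_maxr /=.
  by rewrite -{1}(mul1mx (D *m B)) -WU -mulmxA mxrankM_maxr.
by rewrite e1 E e2.
Qed.

Section Step2.
Variables (N : nat) (P Q : 'M['F_2]_N) (L : int -> 'M['F_2]_N).
Hypotheses (PP : P *m P = 0) (QQ : Q *m Q = 0) (PQ : P *m Q = Q *m P).
Hypotheses (PL : forall k, P *m L k = L (k + 2) *m P)
           (QL : forall k, Q *m L k = L (k + 1) *m Q)
           (LL : forall k, L k *m L k = L k).

Definition P1 := block_mx P Q 0 P.
Definition Q1 := block_mx Q 1%:M 0 Q.
Definition L1 z := block_mx (L (z - 1)) 0 0 (L z).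
Definition P2 := block_mx P1 Q1 0 P1.
Definition L2 z := block_mx (L1 (z - 1)) 0 0 (L1 z).
Definition Wm := block_mx (block_mx 1%:M 0 Q 0) (block_mx 0 0 1%:M 0)
                          (block_mx Q 0 0 1%:M) (block_mx 0 1%:M Q Q) : 'M_((N + N) + (N + N)).
Definition Wm' := block_mx (block_mx 1%:M 0 0 Q) (block_mx 0 0 Q 1%:M)
                          (block_mx Q 1%:M Q 0) (block_mx 0 0 1%:M 0) : 'M_((N + N) + (N + N)).
Definition DD := block_mx (block_mx P 1%:M 0 P) 0 0 (block_mx P 0 0 P) : 'M_((N + N) + (N + N)).
Definition LLm z := block_mx (block_mx (L (z - 1 - 1)) 0 0 (L z)) 0 0
                             (block_mx (L (z - 1)) 0 0 (L (z - 1))) : 'M_((N + N) + (N + N)).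

Lemma WW' : Wm *m Wm' = 1%:M.
Proof.
rewrite /Wm /Wm' !mulmx_block !(mul0mx, mulmx0, mul1mx, mulmx1, addr0, add0r).
rewrite !add_block_mx !(QQ, addmxx, addr0, add0r, block_mx0).
by rewrite -!scalar_mx_block.
Qed.

Lemma W'W : Wm' *m Wm = 1%:M.
Proof.
rewrite /Wm /Wm' !mulmx_block !(mul0mx, mulmx0, mul1mx, mulmx1, addr0, add0r).
rewrite !add_block_mx !(QQ, addmxx, addr0, add0r, block_mx0).
by rewrite -!scalar_mx_block.
Qed.

Lemma P2W : P2 *m Wm = Wm *m DD.
Proof.
rewrite /P2 /P1 /Q1 /Wm /DD !mulmx_block !(mul0mx, mulmx0, mul1mx, mulmx1, addr0, add0r).
rewrite !add_block_mx !(QQ, addmxx, addr0, add0r, block_mx0).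
by rewrite PQ.
Qed.

Lemma L2W z : L2 z *m Wm = Wm *m LLm z.
Proof.
rewrite /L2 /L1 /Wm /LLm !mulmx_block !(mul0mx, mulmx0, mul1mx, mulmx1, addr0, add0r).
by rewrite !QL !subrK.
Qed.

Lemma cone_rank (A B : 'M['F_2]_N) :
  A *m A = A -> B *m B = B -> B *m P = P *m A ->
  \rank (block_mx A 0 0 B *m block_mx P 1%:M 0 P) = \rank A.
Proof.
move=> AA BB BP.
rewrite mulmx_block !(mul0mx, mulmx0, mul1mx, mulmx1, addr0, add0r).
rewrite block_mxEv.
have sub : (row_mx 0 (B *m P) <= row_mx (A *m P) A)%MS.
  apply/submxP; exists (B *m P).
  rewrite mul_mx_row BP; congr row_mx.
    by rewrite mulmxA -(mulmxA P) AA -BP -mulmxA PP mulmx0.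
  by rewrite -mulmxA AA.
rewrite -addsmxE (addsmx_idPl sub).
apply/eqP; rewrite eqn_leq; apply/andP; split.
  have -> : row_mx (A *m P) A = A *m row_mx P 1%:M by rewrite mul_mx_row mulmx1.
  exact: mxrankM_maxl.
apply: (leq_trans _ (mxrankM_maxl _ (col_mx (0 : 'M_(N, N)) 1%:M))).
by rewrite mul_row_col mulmx0 mulmx1 add0r.
Qed.
Lemma step2_rank z :
  \rank (L2 z *m P2) = (\rank (L (z - 1 - 1)) + (\rank (L (z - 1) *m P) + \rank (L (z - 1) *m P)))%N.
Proof.
rewrite (rank_conj WW' W'W P2W (L2W z)) /LLm /DD.
rewrite mulmx_block !(mul0mx, mulmx0, mul1mx, mulmx1, addr0, add0r).
rewrite rank_diag_block_mx cone_rank //.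
  rewrite mulmx_block !(mul0mx, mulmx0, mul1mx, mulmx1, addr0, add0r).
  by rewrite rank_diag_block_mx.
by rewrite PL; congr (L _ *m P); ring.
Qed.

Lemma step2_count z :
  \rank (L2 z) = (\rank (L (z - 1 - 1)) + (\rank (L (z - 1)) + \rank (L (z - 1))) + \rank (L z))%N.
Proof. by rewrite /L2 /L1 !rank_diag_block_mx !addnA. Qed.

End Step2.
Lemma rank_ker_cap n (A L : 'M['F_2]_n) :
  \rank (kermx A :&: L)%MS = (\rank L - \rank (L *m A))%N.
Proof.
rewrite -(mxrank_mul_ker L A) addKn.
by rewrite capmxC.
Qed.

Lemma rank_img_cap n (A L L2 : 'M['F_2]_n) :
  L *m L = L -> A *m L = L2 *m A ->
  \rank (A :&: L)%MS = \rank (L2 *m A).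
Proof.
move=> LL AL; apply/eqP; rewrite eqn_leq; apply/andP; split; apply: mxrankS.
  have /submxP[Y defY] : (A :&: L <= A)%MS by apply: capmxSl.
  have /submxP[Z defZ] : (A :&: L <= L)%MS by apply: capmxSr.
  have -> : (A :&: L)%MS = (A :&: L)%MS *m L by rewrite {2}defZ -mulmxA LL -defZ.
  by rewrite {1}defY -mulmxA AL; exact: submxMl.
by rewrite sub_capmx; apply/andP; split; [exact: submxMl | rewrite -AL; exact: submxMl].
Qed.
Section Iso.
Variables (T : finType) (m : nat) (f : T -> 'I_m) (g : 'I_m -> T).
Hypotheses (fK : cancel f g) (gK : cancel g f).

Definition isoU : 'M['F_2]_(#|{: T}|, m) := \matrix_(i, k) (f (enum_val i) == k)%:R.
Definition isoW : 'M['F_2]_(m, #|{: T}|) := \matrix_(k, i) (f (enum_val i) == k)%:R.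

Lemma isoUW : isoU *m isoW = 1%:M.
Proof.
apply/matrixP => i i'; rewrite !mxE (bigD1 (f (enum_val i))) //= big1 ?addr0.
  rewrite !mxE eqxx mul1r (can_eq fK) (inj_eq (@enum_val_inj _ _)) eq_sym.
  by case: (i' == i).
by move=> k /negbTE kn; rewrite !mxE eq_sym kn mul0r.
Qed.

Lemma isoWU : isoW *m isoU = 1%:M.
Proof.
apply/matrixP => k k'; rewrite !mxE (bigD1 (enum_rank (g k))) //= big1 ?addr0.
  rewrite !mxE enum_rankK gK eqxx mul1r; by case: (k == k').
move=> i /negbTE ni; rewrite !mxE.
case: eqP => [e|]; last by rewrite mul0r.
by rewrite -e fK enum_valK eqxx in ni.
Qed.

Lemma iso_conj (A : T -> T -> 'F_2) (B : 'M['F_2]_m) :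
  (forall x y, A x y = B (f x) (f y)) ->
  (\matrix_(i, k) A (enum_val i) (enum_val k)) *m isoU = isoU *m B.
Proof.
move=> AB; apply/matrixP => i k; rewrite !mxE.
rewrite (bigD1 (enum_rank (g k))) //= big1 ?addr0.
  rewrite (bigD1 (f (enum_val i))) //= big1 ?addr0.
    by rewrite !mxE enum_rankK gK !eqxx mulr1 mul1r AB gK.
  by move=> k' /negbTE kn; rewrite !mxE eq_sym kn mul0r.
move=> i' /negbTE ni; rewrite !mxE.
case: eqP => [e|]; last by rewrite mulr0.
by rewrite -e fK enum_valK eqxx in ni.
Qed.
End Iso.

Section Split.
Variable n : nat.
Local Notation T := (n.-tuple bool).
Local Notation N := #|{: T}|.

Definition fsp (t : n.+1.-tuple bool) : 'I_(N + N) :=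
  if thead t then lshift N (enum_rank [tuple of behead t])
  else rshift N (enum_rank [tuple of behead t]).

Definition gsp (k : 'I_(N + N)) : n.+1.-tuple bool :=
  match split k with
  | inl a => [tuple of true :: (enum_val a : T)]
  | inr a => [tuple of false :: (enum_val a : T)]
  end.

Lemma fsp_cons b (r : T) :
  fsp [tuple of b :: r] = if b then lshift N (enum_rank r) else rshift N (enum_rank r).
Proof.
rewrite /fsp theadE.
have -> : [tuple of behead [tuple of b :: r]] = r by apply: val_inj.
by [].
Qed.

Lemma fspK : cancel fsp gsp.
Proof.
move=> t; case/tupleP: t => b r; rewrite fsp_cons /gsp.
case: b.
  have /= -> := unsplitK (inl _ (enum_rank r) : 'I_N + 'I_N).
  by rewrite enum_rankK; apply: val_inj.
have /= -> := unsplitK (inr _ (enum_rank r) : 'I_N + 'I_N).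
by rewrite enum_rankK; apply: val_inj.
Qed.

Lemma gspK : cancel gsp fsp.
Proof.
move=> k; rewrite /gsp; case: split_ordP => a -> /=; rewrite fsp_cons enum_valK //.
Qed.
End Split.
Definition dmx n (p : 'I_n -> bool) : 'M['F_2]_n := \matrix_(i, k) ((i == k) && p i)%:R.

Lemma mul_dmx_r n (A : 'M['F_2]_n) p i k : (A *m dmx p) i k = A i k * (p k)%:R.
Proof.
rewrite mxE (bigD1 k) //= big1 ?addr0; first by rewrite mxE eqxx.
by move=> j /negbTE jk; rewrite mxE jk mulr0.
Qed.

Lemma mul_dmx_l n (A : 'M['F_2]_n) p i k : (dmx p *m A) i k = (p i)%:R * A i k.
Proof.
rewrite mxE (bigD1 i) //= big1 ?addr0; first by rewrite mxE eqxx.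
by move=> j /negbTE jk; rewrite mxE eq_sym jk mul0r.
Qed.

Lemma dmxK n (p : 'I_n -> bool) : dmx p *m dmx p = dmx p.
Proof.
apply/matrixP => i k; rewrite mul_dmx_r mxE.
by case: eqP => [->|]; case: (p k); rewrite ?mulr1 ?mulr0 ?andbF.
Qed.

Definition Qmx (J : seq nat) : 'M['F_2]_#|{: MJbasis J}| :=
  \matrix_(i, k) tq J (tval (enum_val i : MJbasis J)) (tval (enum_val k : MJbasis J)).

Definition Lz (J : seq nat) (z : int) : 'M['F_2]_#|{: MJbasis J}| :=
  dmx (fun i => (redlen (enum_val i : MJbasis J))%:Z == z).

Lemma lenpartE J (l : nat) : lenpart J l = Lz J l.
Proof. by apply/matrixP => i k; rewrite !mxE. Qed.
Lemma tq_deg J s s' : tq J s s' != 0 -> count id s = (count id s').+1.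
Proof.
elim: J s s' => [|j J IH] [|b r] [|c r'] //=; try by rewrite eqxx.
case: b; case: c; rewrite /Mq /= ?mul0r ?mul1r ?add0r ?addr0 ?eqxx //.
- by move/IH => ->.
- by case: (r =P r') => [->|_] //; rewrite eqxx.
- by move/IH => ->.
Qed.
Lemma tp_deg J s s' : tp J s s' != 0 -> count id s = (count id s').+2.
Proof.
elim: J s s' => [|j J IH] [|b r] [|c r'] //=; try by rewrite eqxx.
case: b; case: c; rewrite /Mp /Mq /= ?mul0r ?mul1r ?add0r ?addr0 ?eqxx //.
- by move/IH => ->.
- by move/tq_deg => ->.
- by move/IH => ->.
Qed.

Lemma eqzS2 (n : nat) (k : int) : ((n.+2)%:Z == k + 2) = (n%:Z == k).
Proof. by rewrite -[n.+2]addn2 PoszD (inj_eq (addIr _)). Qed.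
Lemma eqzS1 (n : nat) (k : int) : ((n.+1)%:Z == k + 1) = (n%:Z == k).
Proof. by rewrite -[n.+1]addn1 PoszD (inj_eq (addIr _)). Qed.

Lemma PL J k : Pmx J *m Lz J k = Lz J (k + 2) *m Pmx J.
Proof.
apply/matrixP => i i'; rewrite mul_dmx_r mul_dmx_l mxE.
set v := tp _ _ _; case: (v =P 0) => [->|/eqP]; first by rewrite mul0r mulr0.
by move/tp_deg; rewrite /redlen => ->; rewrite eqzS2 mulrC.
Qed.

Lemma QL J k : Qmx J *m Lz J k = Lz J (k + 1) *m Qmx J.
Proof.
apply/matrixP => i i'; rewrite mul_dmx_r mul_dmx_l mxE.
set v := tq _ _ _; case: (v =P 0) => [->|/eqP]; first by rewrite mul0r mulr0.
by move/tq_deg; rewrite /redlen => ->; rewrite eqzS1 mulrC.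
Qed.

Lemma LL J k : Lz J k *m Lz J k = Lz J k.
Proof. exact: dmxK. Qed.

Definition Uj (J : seq nat) := isoU (@fsp (size J)).
Definition Wj (J : seq nat) := isoW (@fsp (size J)).

Lemma UWj J : Uj J *m Wj J = 1%:M.
Proof. exact: (isoUW (@fspK _)). Qed.
Lemma WUj J : Wj J *m Uj J = 1%:M.
Proof. exact: isoWU (@fspK _) (@gspK _). Qed.

Lemma Piso j J : Pmx (j :: J) *m Uj J = Uj J *m block_mx (Pmx J) (Qmx J) 0 (Pmx J).
Proof.
apply: (@iso_conj _ _ _ _ (@fspK (size J)) (@gspK (size J)) (fun x y => tp (j :: J) (tval x) (tval y))) => x y.
case/tupleP: x => b r; case/tupleP: y => c r'; rewrite !fsp_cons /=.
case: b; case: c;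
  rewrite ?block_mxEul ?block_mxEur ?block_mxEdl ?block_mxEdr !mxE ?enum_rankK /Mp /Mq /=;
  by rewrite ?mul0r ?mul1r ?add0r ?addr0.
Qed.

Lemma Qiso j J : Qmx (j :: J) *m Uj J = Uj J *m block_mx (Qmx J) 1%:M 0 (Qmx J).
Proof.
apply: (@iso_conj _ _ _ _ (@fspK (size J)) (@gspK (size J)) (fun x y => tq (j :: J) (tval x) (tval y))) => x y.
case/tupleP: x => b r; case/tupleP: y => c r'; rewrite !fsp_cons /=.
case: b; case: c;
  rewrite ?block_mxEul ?block_mxEur ?block_mxEdl ?block_mxEdr !mxE ?enum_rankK /Mp /Mq /=;
  rewrite ?mul0r ?mul1r ?add0r ?addr0 ?mulr1 //.
by rewrite (inj_eq enum_rank_inj).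
Qed.

Lemma LzE J z : Lz J z = \matrix_(i, k)
   (((enum_val i : MJbasis J) == enum_val k) && ((count id (enum_val i : MJbasis J))%:Z == z))%:R.
Proof. by apply/matrixP => i k; rewrite !mxE (inj_eq (@enum_val_inj _ _)). Qed.

Lemma eqz1 (c : nat) (z : int) : ((1 + c)%N%:Z == z) = (c%:Z == z - 1).
Proof. by rewrite PoszD [RHS]eq_sym subr_eq addrC eq_sym. Qed.

Lemma tuple_cons_eq n b (r r' : n.-tuple bool) :
  ([tuple of b :: r] == [tuple of b :: r']) = (r == r').
Proof.
apply/eqP/eqP => [|->] //.
by move/(f_equal val) => /= [] /val_inj.
Qed.

Lemma Liso j J z : Lz (j :: J) z *m Uj J = Uj J *m block_mx (Lz J (z - 1)) 0 0 (Lz J z).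
Proof.
rewrite LzE.
apply: (@iso_conj _ _ _ _ (@fspK (size J)) (@gspK (size J))
  (fun x y => ((x == y) && ((count id x)%:Z == z))%:R)) => x y.
case/tupleP: x => b r; case/tupleP: y => c r'; rewrite !fsp_cons /=.
case: b; case: c;
  rewrite ?block_mxEul ?block_mxEur ?block_mxEdl ?block_mxEdr !mxE ?enum_rankK //=.
  by rewrite tuple_cons_eq (inj_eq enum_rank_inj) eqz1.
by rewrite tuple_cons_eq (inj_eq enum_rank_inj) add0n.
Qed.

Lemma transfer_eq m m' (U : 'M['F_2]_(m, m')) (W : 'M['F_2]_(m', m)) (A A' : 'M['F_2]_m) (B B' : 'M['F_2]_m') :
  U *m W = 1%:M -> A *m U = U *m B -> A' *m U = U *m B' -> B = B' -> A = A'.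
Proof.
move=> UW AU AU' BB.
by rewrite -(mulmx1 A) -UW mulmxA AU BB -AU' -mulmxA UW mulmx1.
Qed.

Lemma conj_mul m m' (U : 'M['F_2]_(m, m')) (A1 A2 : 'M['F_2]_m) (B1 B2 : 'M['F_2]_m') :
  A1 *m U = U *m B1 -> A2 *m U = U *m B2 -> (A1 *m A2) *m U = U *m (B1 *m B2).
Proof. by move=> h1 h2; rewrite -mulmxA h2 mulmxA h1 mulmxA. Qed.

Lemma Pmx_nil : Pmx [::] = 0.
Proof. by apply/matrixP => i k; rewrite !mxE. Qed.
Lemma Qmx_nil : Qmx [::] = 0.
Proof. by apply/matrixP => i k; rewrite !mxE. Qed.

Lemma alg J : [/\ Pmx J *m Pmx J = 0, Qmx J *m Qmx J = 0 & Pmx J *m Qmx J = Qmx J *m Pmx J].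
Proof.
elim: J => [|j J [PP QQ PQ]].
  by rewrite Pmx_nil Qmx_nil !mulmx0.
have hP := Piso j J; have hQ := Qiso j J; have UW := UWj J.
have h0 : (0 : 'M['F_2]_#|{: MJbasis (j :: J)}|) *m Uj J = Uj J *m 0 by rewrite mul0mx mulmx0.
split.
- apply: (transfer_eq UW (conj_mul hP hP) h0).
  rewrite mulmx_block !(mul0mx, mulmx0, addr0, add0r) PP PQ addmxx.
  by rewrite block_mx0.
- apply: (transfer_eq UW (conj_mul hQ hQ) h0).
  rewrite mulmx_block !(mul0mx, mulmx0, mul1mx, mulmx1, addr0, add0r) QQ addmxx.
  by rewrite block_mx0.
- apply: (transfer_eq UW (conj_mul hP hQ) (conj_mul hQ hP)).
  by rewrite !mulmx_block !(mul0mx, mulmx0, mul1mx, mulmx1, addr0, add0r) QQ PQ addr0 add0r.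
Qed.

Definition cz J z := \rank (Lz J z).
Definition rz J z := \rank (Lz J z *m Pmx J).

Lemma rank_conj1 m m' (U : 'M['F_2]_(m, m')) (W : 'M['F_2]_(m', m))
  (C : 'M['F_2]_m) (D : 'M['F_2]_m') :
  U *m W = 1%:M -> W *m U = 1%:M -> C *m U = U *m D -> \rank C = \rank D.
Proof.
move=> UW WU CU.
have := rank_conj UW WU (_ : 1%:M *m U = U *m 1%:M) CU.
by rewrite !mulmx1 mul1mx => ->.
Qed.

Lemma one_step_c j J z : cz (j :: J) z = (cz J (z - 1) + cz J z)%N.
Proof.
rewrite /cz (rank_conj1 (UWj J) (WUj J) (Liso j J z)).
by rewrite rank_diag_block_mx.
Qed.

Lemma one_step_r j J z : rz (j :: J) z = \rank (block_mx (Lz J (z - 1)) 0 0 (Lz J z) *m block_mx (Pmx J) (Qmx J) 0 (Pmx J)).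
Proof. exact: (rank_conj (UWj J) (WUj J) (Piso j J) (Liso j J z)). Qed.

Section TwoStep.
Variables (j1 j2 : nat) (J : seq nat).
Local Notation J1 := (j2 :: J).
Let U2 := block_mx (Uj J) 0 0 (Uj J).
Let W2 := block_mx (Wj J) 0 0 (Wj J).

Lemma U2W2 : U2 *m W2 = 1%:M.
Proof.
rewrite /U2 /W2 mulmx_block !(mul0mx, mulmx0, addr0, add0r) UWj.
by rewrite -scalar_mx_block.
Qed.
Lemma W2U2 : W2 *m U2 = 1%:M.
Proof.
rewrite /U2 /W2 mulmx_block !(mul0mx, mulmx0, addr0, add0r) WUj.
by rewrite -scalar_mx_block.
Qed.

Lemma P1U2 : block_mx (Pmx J1) (Qmx J1) 0 (Pmx J1) *m U2 = U2 *m P2 (Pmx J) (Qmx J).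
Proof.
rewrite /U2 /P2 /P1 /Q1 !mulmx_block !(mul0mx, mulmx0, addr0, add0r).
by rewrite Piso Qiso.
Qed.

Lemma L1U2 z : block_mx (Lz J1 (z - 1)) 0 0 (Lz J1 z) *m U2 = U2 *m L2 (Lz J) z.
Proof.
rewrite /U2 /L2 /L1 !mulmx_block !(mul0mx, mulmx0, addr0, add0r).
by rewrite !Liso.
Qed.

Lemma two_step_r z : rz (j1 :: J1) z = (cz J (z - 1 - 1) + (rz J (z - 1) + rz J (z - 1)))%N.
Proof.
have [PP QQ PQ] := alg J.
rewrite one_step_r (rank_conj U2W2 W2U2 P1U2 (L1U2 z)).
by rewrite step2_rank //; [apply: PL | apply: QL | apply: LL].
Qed.

Lemma two_step_c z :
  cz (j1 :: J1) z = (cz J (z - 1 - 1) + (cz J (z - 1) + cz J (z - 1)) + cz J z)%N.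
Proof.
rewrite /cz (rank_conj1 (UWj J1) (WUj J1) (Liso j1 J1 z)).
rewrite (rank_conj1 U2W2 W2U2 (L1U2 z)).
exact: step2_count.
Qed.
End TwoStep.

Lemma rz_nil z : rz [::] z = 0%N.
Proof. by rewrite /rz Pmx_nil mulmx0 mxrank0. Qed.

Lemma cz_nil z : cz [::] z = (z == 0).
Proof.
rewrite /cz; case: (z =P 0) => [->|nz].
  have -> : Lz [::] 0 = 1%:M.
    apply/matrixP => i k; rewrite !mxE.
    have -> : redlen (enum_val i : MJbasis [::]) = 0%N.
      by rewrite /redlen (tuple0 (enum_val i : MJbasis [::])).
    by rewrite eqxx andbT.
  by rewrite mxrank1 card_tuple card_bool.
have -> : Lz [::] z = 0.
  apply/matrixP => i k; rewrite !mxE.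
  have -> : redlen (enum_val i : MJbasis [::]) = 0%N.
    by rewrite /redlen (tuple0 (enum_val i : MJbasis [::])).
  by move/eqP/negbTE: nz; rewrite eq_sym => ->; rewrite andbF.
by rewrite mxrank0.
Qed.

Lemma rz_one j z : rz [:: j] z = 0%N.
Proof.
by rewrite one_step_r Pmx_nil Qmx_nil block_mx0 mulmx0 mxrank0.
Qed.

Definition H (n : nat) (z : int) : nat :=
  match z with
  | Posz l => if odd n then (if (l == n./2) || (l == (n./2).+1) then 2 ^ (n./2) else 0)%N
              else (if l == n./2 then 2 ^ (n./2) else 0)%N
  | Negz _ => 0%N
  end.

Lemma H_neg n z : z < 0 -> H n z = 0%N.
Proof. by case: z. Qed.

Lemma H_rec n z : H n.+2 z = (H n (z - 1) + H n (z - 1))%N.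
Proof.
case: z => [l|k].
  2: by rewrite (@H_neg n (Negz k - 1)) //; lia.
case: l => [|l].
  rewrite (@H_neg n (0%:Z - 1)) //.
  by rewrite /= negbK; case: (odd n).
have -> : (l.+1)%:Z - 1 = l%:Z by lia.
rewrite /= negbK !eqSS; case: (odd n); case: ifP => _;
  by rewrite ?expnS ?mul2n ?addnn.
Qed.

Definition Sprop J := forall z, cz J z = (H (size J) z + rz J z + rz J (z + 2))%N.

Lemma S_nil : Sprop [::].
Proof.
move=> z; rewrite !rz_nil cz_nil !addn0.
case: z => [[|l]|k] //=.
Qed.

Lemma S_one j : Sprop [:: j].
Proof.
move=> z; rewrite !rz_one one_step_c !cz_nil !addn0.
case: z => [[|[|l]]|k] //=.
Qed.

Lemma S_step j1 j2 J : Sprop J -> Sprop [:: j1, j2 & J].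
Proof.
move=> SJ z.
rewrite two_step_c !two_step_r /= H_rec.
have -> : z + 2 - 1 - 1 = z by ring.
have -> : z + 2 - 1 = (z - 1) + 2 by ring.
rewrite (SJ (z - 1)); lia.
Qed.

Lemma S_all n J : size J = n -> Sprop J.
Proof.
elim/ltn_ind: n J => n IH [|j1 [|j2 J]] /=.
- by move=> _; exact: S_nil.
- by move=> _; exact: S_one.
- move=> e; apply: S_step; apply: (IH (size J)) => //.
  by rewrite -e ltnS leqnSn.
Qed.

Lemma margolisE J (l : nat) :
  margolisDim J l = (cz J l - rz J l - rz J (l%:Z + 2))%N.
Proof.
rewrite /margolisDim lenpartE rank_ker_cap (rank_img_cap (L2 := Lz J (l%:Z + 2))) //.
  exact: LL.
exact: PL.
Qed.

Theorem mainTheorem9 (J : seq nat) (t l : nat) :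
  uniq J -> all (fun j => 0 < j)%N J ->
  (size J = 2 * t ->
     margolisDim J l = (if l == t then 2 ^ t else 0))%N /\
  (size J = 2 * t + 1 ->
     margolisDim J l = (if (l == t) || (l == t.+1) then 2 ^ t else 0))%N.
Proof.
move=> _ _.
have E : margolisDim J l = H (size J) l.
  by rewrite margolisE (S_all (erefl _) l); lia.
split => sz; rewrite E sz /=.
- by rewrite mul2n odd_double doubleK.
- by rewrite mul2n addn1 /= odd_double /= uphalf_double.
Qed.
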